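(* Let $X$ be a Hausdorff space with $X=Y\cup T$, where $Y$ and $T$ are totally disconnected subspaces and $T$ is compact. Then $\mathcal{K}(X)$ is hereditarily disconnected if and only if the quotient space $X/T$ (obtained by collapsing $T$ to a point) is hereditarily disconnected.
   Context: $\mathcal{K}(X)$ is the set of nonempty compact subsets of $X$ with the Vietoris topology (generated by $U^+=\{A: A\subset U\}$ and $U^-=\{A: A\cap U\neq\emptyset\}$ for $U$ open in $X$). A space is hereditarily disconnected if every nonempty connected subset is a singleton; it is totally disconnected if any two distinct points can be separated by a clopen set. *)

(* Defs.v *)
From HB Require Import structures.
From mathcomp Require Import all_boot all_order all_algebra generic_quotient.
From mathcomp Require Import all_classical all_reals all_analysis.

Set Implicit Arguments.
Unset Strict Implicit.
Unset Printing Implicit Defensive.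

Local Open Scope classical_set_scope.

Definition hereditarily_disconnected (T : topologicalType) : Prop :=
  forall A : set T, A !=set0 -> connected A -> exists x : T, A = [set x].

(* Totally disconnected (paper sense) for a subspace A of X: any two distinct
   points of A are separated by a clopen subset of the subspace A.  The
   subspace A is the sigma type [set_type A] with its subspace (initial)
   topology; the library's [zero_dimensional] is exactly the paper's notion. *)
Definition totally_disconnected_subspace (X : topologicalType) (A : set X) :=
  zero_dimensional (set_type A).

Record hyperspace (X : topologicalType) := Hyper {
  hset : set X;
  hset_prop : hset !=set0 /\ compact hset }.

HB.instance Definition _ (X : topologicalType) :=
  gen_eqMixin (hyperspace X).
HB.instance Definition _ (X : topologicalType) :=
  gen_choiceMixin (hyperspace X).

(* subbasis index: (true, U) ~ U^+ , (false, U) ~ U^- , for U open *)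
Definition vietoris_index (X : topologicalType) : pointedType :=
  (bool * set X)%type.

Definition vietoris_sub (X : topologicalType) (i : vietoris_index X)
  : set (hyperspace X) :=
  if i.1 then [set A | hset A `<=` i.2]
  else [set A | hset A `&` i.2 !=set0].

HB.instance Definition _ (X : topologicalType) :=
  @isSubBaseTopological.Build (hyperspace X) (vietoris_index X)
    [set i | open i.2] (@vietoris_sub X).

Definition collapse_rel (X : topologicalType) (T : set X) : rel X :=
  fun x y => (x == y) || `[< T x /\ T y >].

Lemma collapse_refl (X : topologicalType) (T : set X) :
  reflexive (collapse_rel T).
Proof. by move=> x; rewrite /collapse_rel eqxx. Qed.

Lemma collapse_sym (X : topologicalType) (T : set X) :
  symmetric (collapse_rel T).
Proof.
move=> x y; rewrite /collapse_rel eq_sym; congr (_ || _).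
by apply/asboolP/asboolP => -[].
Qed.

Lemma collapse_trans (X : topologicalType) (T : set X) :
  transitive (collapse_rel T).
Proof.
move=> y x z; rewrite /collapse_rel.
case/orP => [/eqP -> //|/asboolP [Tx Ty]].
case/orP => [/eqP <-|/asboolP [_ Tz]]; first by apply/orP; right; apply/asboolP.
by apply/orP; right; apply/asboolP.
Qed.

Canonical collapse_equiv (X : topologicalType) (T : set X) :=
  EquivRel (collapse_rel T) (@collapse_refl X T) (@collapse_sym X T)
    (@collapse_trans X T).

Definition collapse (X : topologicalType) (T : set X) : topologicalType :=
  quotient_topology {eq_quot (collapse_rel T)}%qT.

(* Main.v *)
Require Import Defs.
From HB Require Import structures.
From mathcomp Require Import all_boot all_order all_algebra generic_quotient.
From mathcomp Require Import all_classical all_reals all_analysis.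

Local Open Scope classical_set_scope.

Section Aux.
Context {X : topologicalType}.

Lemma dir_cover (C : set X) (A : set (set X)) :
  compact C -> (forall a, A a -> open a) -> A !=set0 ->
  (forall a b, A a -> A b -> exists2 c, A c & a `|` b `<=` c) ->
  C `<=` \bigcup_(a in A) a -> exists2 a, A a & C `<=` a.
Proof.
move=> cC oA [a0 Aa0] dirA cov.
apply: contrapT => nex.
have nsub a : A a -> ~ C `<=` a by move=> Aa Ca; apply: nex; exists a.
pose F := filter_from A (fun a => C `\` a).
have FF : Filter F.
  apply: filter_from_filter; first by exists a0.
  move=> a b Aa Ab; have [c Ac abc] := dirA a b Aa Ab.
  exists c => // x [Cx ncx]; split; split => //.
    by move=> ax; apply: ncx; apply: abc; left.
  by move=> bx; apply: ncx; apply: abc; right.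
have PF : ProperFilter F.
  apply: filter_from_proper => // a Aa.
  apply: contrapT => ne; apply: (nsub a Aa) => x Cx.
  by apply: contrapT => nax; apply: ne; exists x.
have FC : F C by exists a0 => // x [].
have [y [Cy cly]] := cC F PF FC.
have [a Aa ay] := cov y Cy.
have FCa : F (C `\` a) by exists a.
have na : nbhs y a by apply: open_nbhs_nbhs; split => //; exact: oA.
by have [z [[_ naz] az]] := cly _ _ FCa na.
Qed.

Lemma conn_split {S : topologicalType} (CC O1 O2 : set S) :
  connected CC -> open O1 -> open O2 -> CC `<=` O1 `|` O2 ->
  CC `&` O1 `&` O2 `<=` set0 -> (CC `&` O1) !=set0 -> CC `<=` O1.
Proof.
move=> cC o1 o2 cov disj ne.
have e : CC `&` O1 = CC `&` ~` O2.
  apply/seteqP; split => x [Cx h]; split => //.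
    by move=> O2x; apply: (disj x).
  by case: (cov x Cx).
have := cC (CC `&` O1) ne (ex_intro2 _ _ O1 o1 erefl)
  (ex_intro2 _ _ (~` O2) (open_closedC o2) e).
by move=> <- x [].
Qed.

Definition sep_ok (S K : set X) := forall O O', open O -> open O' ->
  S `<=` O `|` O' -> S `&` O `&` O' `<=` set0 -> K `<=` O -> S `<=` O.

Lemma td_sep (Z C : set X) x : zero_dimensional (set_type Z) ->
  C `<=` Z -> compact C -> Z x -> ~ C x ->
  exists O O', open O /\ open O' /\ Z `<=` O `|` O' /\
    Z `&` O `&` O' `<=` set0 /\ C `<=` O /\ ~ O x.
Proof.
move=> zd CZ cC Zx nCx.
pose A := [set O | open O /\ ~ O x /\ exists O', open O' /\
  Z `<=` O `|` O' /\ Z `&` O `&` O' `<=` set0].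
have [a [oa [nax [a' [oa' [cova disja]]]]] Ca] : exists2 a, A a & C `<=` a.
  apply: dir_cover => //.
  - by move=> a [].
  - exists set0; rewrite /A /=; split; first exact: open0.
    split=> //; exists setT; split; first exact: openT.
    split=> [y _|y [[_ []]]] //; by right.
  - move=> a b [oa [nax [a' [oa' [ca da]]]]] [ob [nbx [b' [ob' [cb db]]]]].
    exists (a `|` b) => //; rewrite /A /=; split; first exact: openU.
    split; first by case.
    exists (a' `&` b'); split; first exact: openI.
    split.
      move=> y Zy; case: (ca y Zy) => [ay|a'y]; first by left; left.
      by case: (cb y Zy) => [by'|b'y]; [left; right|right].
    move=> y [[Zy [ay|by']] [a'y b'y]].
      by apply: (da y).
    by apply: (db y).
  - move=> k Ck.
    have Zk := CZ k Ck.
    have neq : (exist _ k (mem_set Zk) : set_type Z) != exist _ x (mem_set Zx).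
      by apply/eqP => /(congr1 sval) /= ekx; apply: nCx; rewrite -ekx.
    have [U [[oU cU] Uk nUx]] := zd _ _ neq.
    case: oU => B oB eB.
    have := closed_openC cU; case => B' oB' eB'.
    exists B => //; last first.
      by have : (set_val @^-1` B) (exist _ k (mem_set Zk)) by rewrite eB.
    rewrite /A /=; split => //; split.
      by move=> Bx; apply: nUx; rewrite -eB.
    exists B'; split => //; split.
      move=> y Zy; pose yy : set_type Z := exist _ y (mem_set Zy).
      case: (pselect (U yy)) => Uy.
        by left; have : (set_val @^-1` B) yy by rewrite eB.
      by right; have : (set_val @^-1` B') yy by rewrite eB'.
    move=> y [[Zy By] B'y]; pose yy : set_type Z := exist _ y (mem_set Zy).
    have h1 : U yy by rewrite -eB.
    have h2 : (~` U) yy by rewrite -eB'.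
    exact: h2.
by exists a, a'.
Qed.

End Aux.

Local Open Scope quotient_scope.

Section Quot.
Context {X : topologicalType} (T : set X).

Lemma piE (x y : X) :
  (\pi_(collapse T) x = \pi_(collapse T) y) <-> collapse_rel T x y.
Proof.
split; first by move=> e; apply/(eqquotP {eq_quot (collapse_rel T)}).
by move/(eqquotP {eq_quot (collapse_rel T)}).
Qed.

Lemma collapse_relP (x y : X) : collapse_rel T x y -> x = y \/ (T x /\ T y).
Proof.
by rewrite /collapse_rel => /orP [/eqP ->|/asboolP h]; [left|right].
Qed.

Lemma hd_quot_sep : hereditarily_disconnected (collapse T) ->
  forall S, T `<=` S -> sep_ok S T -> S `<=` T.
Proof.
move=> hd S TS sok s Ss; apply: contrapT => nTs.
have [t Tt] : T !=set0.
  apply: contrapT => Te.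
  have h : S `<=` set0.
    apply: (sok set0 setT open0 openT).
    - by move=> y _; right.
    - by move=> y [[_ []]].
    - by move=> y Ty; apply: Te; exists y.
  exact: (h s Ss).
pose q := \pi_(collapse T) : X -> collapse T.
have qc : continuous q := pi_continuous.
pose L := q @` S.
have cL : connected L.
  move=> B [b Bb] [C oC BLC] [D cD BLD].
  have oO : open (q @^-1` C) by move/continuousP : qc; apply.
  have oO' : open (q @^-1` (~` D)).
    by move/continuousP : qc; apply; exact: closed_openC.
  have cov : S `<=` q @^-1` C `|` q @^-1` (~` D).
    move=> x Sx; case: (pselect (D (q x))) => Dx; last by right.
    have : B (q x) by rewrite BLD; split => //; exists x.
    by rewrite BLC => -[_ Cx]; left.
  have disj : S `&` q @^-1` C `&` q @^-1` (~` D) `<=` set0.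
    move=> x [[Sx Cx] nDx].
    have : B (q x) by rewrite BLC; split => //; exists x.
    by rewrite BLD => -[_].
  case: (pselect (T `<=` q @^-1` C)) => TO.
    have SO := sok _ _ oO oO' cov disj TO.
    apply/seteqP; split => [y|_ [x Sx <-]]; first by rewrite BLC => -[].
    by rewrite BLC; split; [exists x|exact: SO].
  have [t' [Tt' nOt']] : exists t', T t' /\ ~ (q @^-1` C) t'.
    apply: contrapT => nE; apply: TO => y Ty; apply: contrapT => nOy.
    by apply: nE; exists y.
  have TO' : T `<=` q @^-1` (~` D).
    move=> y Ty; have e : q y = q t'.
      by apply/piE; rewrite /collapse_rel; apply/orP; right; apply/asboolP.
    rewrite /preimage /= e.
    by case: (cov t' (TS t' Tt')).
  have cov' : S `<=` q @^-1` (~` D) `|` q @^-1` C.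
    by move=> x /cov [] h; [right|left].
  have disj' : S `&` q @^-1` (~` D) `&` q @^-1` C `<=` set0.
    by move=> x [[Sx h1] h2]; apply: (disj x).
  have SO' := sok _ _ oO' oO cov' disj' TO'.
  move: Bb; rewrite BLC => -[[y Sy <-] Cy].
  by case: (disj y (conj (conj Sy Cy) (SO' y Sy))).
have [z Lz] := hd L (ex_intro _ (q s) (ex_intro2 _ _ s Ss erefl)) cL.
have h1 : L (q s) by exists s.
have h2 : L (q t) by exists t => //; exact: TS.
rewrite Lz /= in h1 h2.
have : q s = q t by rewrite h1 h2.
by move/piE/collapse_relP => [e|[]] //; apply: nTs; rewrite e.
Qed.

End Quot.

Section Core.
Context {X : topologicalType} (Y T : set X).
Hypothesis hX : hausdorff_space X.
Hypothesis YT : Y `|` T = [set: X].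
Hypothesis zdY : zero_dimensional (set_type Y).
Hypothesis Hq : forall S, T `<=` S -> sep_ok S T -> S `<=` T.

Lemma core (K M : set X) : compact K -> T `<=` K -> K `<=` M ->
  sep_ok M K -> M `<=` K.
Proof.
move=> cK TK KM sM m Mm; apply: contrapT => nKm.
pose Fam (K0 : set X) := [/\ compact K0, T `<=` K0, K0 `<=` K &
  sep_ok ((M `\` K) `|` K0) K0].
pose P (U : set X) := U `<=` K `\` T /\ Fam (K `\` U).
have P0 : P set0.
  split; first by [].
  rewrite setD0; split => //.
  by rewrite setUC setDUK.
have chain : forall F : set (set X), F `<=` P -> total_on F subset ->
    P (\bigcup_(U in F) U).
  move=> F FP Ftot.
  pose UU := \bigcup_(U in F) U.
  have UUsub : UU `<=` K `\` T by move=> x [U FU Ux]; exact: (FP U FU).1.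
  have clKU U : P U -> closed (K `\` U).
    by case=> _ [cKU _ _ _]; exact: compact_closed.
  have clK : closed K := compact_closed hX cK.
  have clinf : closed (K `\` UU).
    rewrite -(openC (K `\` UU)).
    have -> : ~` (K `\` UU) = ~` K `|` \bigcup_(U in F) ~` (K `\` U).
      apply/seteqP; split => x.
        move=> nx; case: (pselect (K x)) => Kx; last by left.
        have : UU x by apply: contrapT => nUx; apply: nx.
        by case=> U FU Ux; right; exists U => // -[].
      case=> [nKx [Kx _]|[U FU nx] [Kx nUx]] //.
      by apply: nx; split => // Ux; apply: nUx; exists U.
    apply: openU; first exact: closed_openC.
    by apply: bigcup_open => U FU; apply: closed_openC; apply: clKU; apply: FP.
  have cKinf : compact (K `\` UU).
    by apply: (subclosed_compact clinf cK) => x [].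
  split => //; split => //.
  - by move=> t Tt; split; [exact: TK | move=> /UUsub [] _; apply].
  move=> O O' oO oO' cov disj KO.
  suff MKO : M `\` K `<=` O by move=> x [/MKO|/KO].
  pose A := [set O `|` ~` (K `\` U) | U in F `|` [set set0]].
  have PF U : (F `|` [set set0]) U -> P U by case=> [/FP|->].
  have [a [U FU <-] KU] : exists2 a, A a & K `<=` a.
    apply: dir_cover => //.
    - move=> _ [U FU <-]; apply: openU => //; apply: closed_openC.
      by apply: clKU; exact: PF.
    - by exists (O `|` ~` (K `\` set0)); exists set0 => //; right.
    - move=> _ _ [U1 FU1 <-] [U2 FU2 <-].
      have mono V1 V2 : V1 `<=` V2 ->
          O `|` ~` (K `\` V1) `<=` O `|` ~` (K `\` V2).
        move=> V12 x [Ox|nx]; [by left|right => -[Kx nV2x]].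
        by apply: nx; split => // V1x; apply: nV2x; apply: V12.
      have [U12|U21] : U1 `<=` U2 \/ U2 `<=` U1.
        case: FU1 => [FU1|->]; last by left.
        case: FU2 => [FU2|->]; last by right.
        exact: Ftot.
      + exists (O `|` ~` (K `\` U2)); first by exists U2.
        by move=> x [/(mono _ _ U12)|].
      + exists (O `|` ~` (K `\` U1)); first by exists U1.
        by move=> x [|/(mono _ _ U21)].
    - move=> k Kk; case: (pselect (O k)) => Ok.
        by exists (O `|` ~` (K `\` set0)); [exists set0 => //; right|left].
      have : UU k by apply: contrapT => nUk; apply: Ok; apply: KO.
      case=> U FU Uk; exists (O `|` ~` (K `\` U)); first by exists U => //; left.
      by right => -[].
  have [_ [cKU TKU KUK sKU]] := PF U FU.
  have clKU' : closed (K `\` U) := compact_closed hX cKU.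
  have KUO : K `\` U `<=` O.
    by move=> x [Kx nUx]; case: (KU x Kx) => // /(_ (conj Kx nUx)).
  have oO'' : open (O' `&` ~` (K `\` U)) by apply: openI => //; exact: closed_openC.
  suff MUO : (M `\` K) `|` (K `\` U) `<=` O by move=> x MKx; apply: MUO; left.
  apply: (sKU O (O' `&` ~` (K `\` U)) oO oO'') => //.
  + move=> x [MKx|KUx]; last by left; exact: KUO.
    case: (cov x (or_introl MKx)) => [Ox|Opx]; first by left.
    by right; split => // -[Kx _]; case: MKx.
  + move=> x [[MUx Ox] [Opx nKUx]]; case: MUx => [MKx|KUx] //.
    by apply: (disj x); split; [split; [left|]|].
have [U [PU maxU]] := Zorn_bigcup chain.
case: (PU) => UKT [cK0 TK0 K0K sM0].
set K0 := K `\` U in cK0 TK0 K0K sM0.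
set M0 := (M `\` K) `|` K0 in sM0.
have MKm : (M `\` K) m by [].
have nTm : ~ T m by move=> /TK.
case: (pselect (K0 `<=` T)) => [K0T|nK0T].
  have : M0 `<=` T.
    apply: Hq; first by move=> x Tx; right; exact: TK0.
    move=> W Wp oO oWp cov disj TO; apply: (sM0 W Wp) => //.
    by move=> x /K0T /TO.
  by move=> /(_ m (or_introl MKm)).
have nsep : ~ sep_ok K0 T by move=> s; apply: nK0T; apply: Hq.
have [W [Wp [oO [oWp [cov [disj [TO nK0O]]]]]]] : exists W Wp, open W /\
    open Wp /\ K0 `<=` W `|` Wp /\ K0 `&` W `&` Wp `<=` set0 /\ T `<=` W /\
    ~ K0 `<=` W.
  apply: contrapT => nE; apply: nsep => W Wp oO oWp c d t.
  apply: contrapT => n; apply: nE; exists W, Wp; do 5 split => //.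
have [k [K0k nOk]] : exists k, K0 k /\ ~ W k.
  apply: contrapT => nE; apply: nK0O => y K0y; apply: contrapT => nOy.
  by apply: nE; exists y.
pose K2 := K0 `&` ~` W.
pose K1 := K0 `&` ~` Wp.
have cK1 : compact K1 by apply: compact_closedI => //; exact: open_closedC.
have cK2 : compact K2 by apply: compact_closedI => //; exact: open_closedC.
have K0O : forall x, K0 x -> W x -> ~ Wp x.
  by move=> x K0x Ox Wpx; apply: (disj x).
have K1O : K1 `<=` W.
  by move=> x [K0x nWpx]; case: (cov x K0x).
have TK1 : T `<=` K1.
  by move=> t Tt; split; [exact: TK0|apply: K0O; [exact: TK0|exact: TO]].
pose U' := U `|` K2.
have eK1 : K `\` U' = K1.
  apply/seteqP; split => x.
    move=> [Kx nU'x]; have K0x : K0 x by split => // Ux; apply: nU'x; left.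
    have Ox : W x by apply: contrapT => nOx; apply: nU'x; right.
    by split => //; exact: K0O.
  move=> [[Kx nUx] nWpx]; split => // -[//|[_ nOx]].
  by case: (cov x (conj Kx nUx)).
have nPU' : ~ P U'.
  apply: maxU; split; first by move=> x Ux; left.
  by move=> /(_ k (or_intror (conj K0k nOk))) Uk; case: K0k.
pose M1 := (M `\` K) `|` K1.
have nsep1 : ~ sep_ok M1 K1.
  move=> s1; apply: nPU'; split.
    move=> x [/UKT//|[[Kx _] nOx]]; split => // Tx; apply: nOx; exact: TO.
  rewrite eK1; split => //.
  by move=> x [K0x _]; exact: K0K.
have [W1 [W1p [oW1 [oW1p [cov1 [disj1 [K1W1 nM1W1]]]]]]] : exists W1 W1p,
    open W1 /\ open W1p /\ M1 `<=` W1 `|` W1p /\ M1 `&` W1 `&` W1p `<=` set0 /\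
    K1 `<=` W1 /\ ~ M1 `<=` W1.
  apply: contrapT => nE; apply: nsep1 => W1 W1p oW1 oW1p c d t.
  apply: contrapT => n; apply: nE; exists W1, W1p; do 5 split => //.
have [r [M1r nW1r]] : exists r, M1 r /\ ~ W1 r.
  apply: contrapT => nE; apply: nM1W1 => y M1y; apply: contrapT => nOy.
  by apply: nE; exists y.
have MKr : (M `\` K) r by case: M1r => // /K1W1.
have W1pr : W1p r by case: (cov1 r M1r).
have YnT x : ~ T x -> Y x.
  by move=> nTx; have : [set: X] x by []; rewrite -YT => -[].
have nKY x : ~ K x -> Y x by move=> nKx; apply: YnT => /TK.
have Yr : Y r by apply: nKY; case: MKr.
have K2Y : K2 `<=` Y by move=> x [_ nOx]; apply: YnT => /TO.
have nK2r : ~ K2 r by move=> [[Kr _] _]; case: MKr.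
have [P1 [P1p [oP [oP' [covP [disjP [K2P nPr]]]]]]] :=
  @td_sep _ Y K2 r zdY K2Y cK2 Yr nK2r.
have clK : closed K := compact_closed hX cK.
have oG' : open (W1p `&` P1p `&` ~` K).
  by apply: openI; [exact: openI|exact: closed_openC].
have : M0 `<=` W1 `|` P1.
  apply: (sM0 _ _ (openU oW1 oP) oG').
  - move=> x [MKx|K0x].
      case: (cov1 x (or_introl MKx)) => [W1x|W1px]; first by left; left.
      case: (covP x (nKY x (proj2 MKx))) => [Px|P'x]; first by left; right.
      by right; split; [split|case: MKx].
    left; case: (pselect (W x)) => Ox.
      by left; apply: K1W1; split => //; exact: K0O.
    by right; apply: K2P.
  - move=> x [[M0x WPx] [[W1px P'x] nKx]].
    have MKx : (M `\` K) x by case: M0x => // /K0K Kx; case: nKx.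
    case: WPx => [W1x|Px].
      by apply: (disj1 x); split => //; split => //; left.
    by apply: (disjP x); split => //; split => //; exact: nKY.
  - move=> x K0x; case: (pselect (W x)) => Ox.
      by left; apply: K1W1; split => //; exact: K0O.
    by right; apply: K2P.
by move=> /(_ r (or_introl MKr)) [/nW1r|/nPr].
Qed.

End Core.

Section Hyper.
Context {X : topologicalType}.

Lemma hyper_eq (A B : hyperspace X) : hset A = hset B -> A = B.
Proof.
case: A => a pa; case: B => b pb /= e; subst b.
by congr Hyper; exact: Prop_irrelevance.
Qed.

Lemma vs_open (i : vietoris_index X) : open i.2 -> open (vietoris_sub i).
Proof.
move=> oi; exists [set vietoris_sub i]; last by rewrite bigcup_set1.
by move=> _ ->; exact: finI_from1.
Qed.

Lemma hard (Y T : set X) : hausdorff_space X -> Y `|` T = [set: X] ->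
  zero_dimensional (set_type Y) -> zero_dimensional (set_type T) ->
  compact T -> hereditarily_disconnected (collapse T) ->
  hereditarily_disconnected (hyperspace X).
Proof.
move=> hX YT zdY zdT cT hd CC [B0 CCB0] cCC; exists B0.
have Hq := @hd_quot_sep _ T hd.
have clT : closed T := compact_closed hX cT.
suff sub : forall A B, CC A -> CC B -> hset A `<=` hset B.
  apply/seteqP; split => [A CCA|_ ->//]; apply: hyper_eq.
  by apply/seteqP; split; apply: sub.
move=> A B CCA CCB.
have cB : compact (hset B) := (hset_prop B).2.
have clB : closed (hset B) := compact_closed hX cB.
have stepi : forall C, CC C -> hset C `<=` hset B `|` T.
  pose K := hset B `|` T.
  pose M := K `|` \bigcup_(C in CC) hset C.
  have cK : compact K by apply: compactU.
  have MK : M `<=` K.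
    apply: (@core _ Y T hX YT zdY Hq K M cK); first by move=> x Tx; right.
      by move=> x Kx; left.
    move=> W Wp oW oWp cov disj KW.
    have sub1 : CC `<=` vietoris_sub (true, W).
      apply: (@conn_split _ CC _ _ cCC (vs_open (true, W) oW) (vs_open (false, Wp) oWp)).
      - move=> C CCC; case: (pselect (hset C `<=` W)) => CW; first by left.
        right; apply: contrapT => nE; apply: CW => x Cx.
        case: (cov x (or_intror (ex_intro2 _ _ C CCC Cx))) => // Wpx.
        by case: nE; exists x.
      - move=> C [[CCC /= CW] [x [Cx Wpx]]].
        apply: (disj x); split => //; split; last exact: CW.
        by right; exists C.
      - by exists B; split => //= x Bx; apply: KW; left.
    move=> x [Kx|[C CCC Cx]]; first exact: KW.
    exact: (sub1 C CCC).
  by move=> C CCC x Cx; apply: MK; right; exists C.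
move=> x Ax; apply: contrapT => nBx.
have Tx : T x by case: (stepi A CCA x Ax).
have cBT : compact (hset B `&` T) by apply: compact_closedI.
have [W [Wp [oW [oWp [cov [disj [BTW nWx]]]]]]] :=
  @td_sep _ T (hset B `&` T) x zdT (fun y h => h.2) cBT Tx (fun h => nBx h.1).
have o1 : open (Wp `&` ~` hset B) by apply: openI => //; exact: closed_openC.
have o2 : open (~` T `|` W) by apply: openU => //; exact: closed_openC.
have sub1 : CC `<=` vietoris_sub (false, Wp `&` ~` hset B).
  apply: (@conn_split _ CC _ _ cCC (vs_open (false, _) o1) (vs_open (true, _) o2)).
  - move=> C CCC; case: (pselect (hset C `<=` ~` T `|` W)) => CW; first by right.
    left; apply: contrapT => nE; apply: CW => y Cy.
    case: (pselect (T y)) => Ty; last by left.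
    case: (pselect (W y)) => Wy; first by right.
    case: nE; exists y; split => //; split; first by case: (cov y Ty).
    by move=> By; apply: Wy; apply: BTW.
  - move=> C [[CCC [y [Cy [Wpy nBy]]]] /= CW].
    have Ty : T y by case: (stepi C CCC y Cy).
    case: (CW y Cy) => // Wy.
    by apply: (disj y).
  - exists A; split => //; exists x; split => //; split => //.
    by case: (cov x Tx).
by case: (sub1 B CCB) => y [By [_ nBy]].
Qed.

Definition addpt {T : set X} (cT : compact T) (x : X) : hyperspace X :=
  @Hyper X (T `|` [set x])
    (conj (ex_intro _ x (or_intror erefl)) (@compactU X T [set x] cT (@compact_set1 X x))).

Lemma addpt_continuous (T : set X) (cT : compact T) :
  continuous (addpt cT).
Proof.
have op (i : vietoris_index X) : open i.2 ->
    open (addpt cT @^-1` vietoris_sub i).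
  case: i => -[] U /= oU.
    case: (pselect (T `<=` U)) => TU.
      have -> : addpt cT @^-1` [set A | hset A `<=` U] = U.
        apply/seteqP; split => x /=; first by apply; right.
        by move=> Ux y [/TU|->].
      exact: oU.
    have -> : addpt cT @^-1` [set A | hset A `<=` U] = set0.
      by apply/seteqP; split => x //= h; apply: TU => y Ty; apply: h; left.
    exact: open0.
  case: (pselect (T `&` U !=set0)) => TU.
    have -> : addpt cT @^-1` [set A | hset A `&` U !=set0] = setT.
      apply/seteqP; split => x // _ /=; case: TU => y [Ty Uy].
      by exists y; split => //; left.
    exact: openT.
  have -> : addpt cT @^-1` [set A | hset A `&` U !=set0] = U.
    apply/seteqP; split => x /=.
      case=> y [[Ty|->] Uy] //; case: TU; by exists y.
    by move=> Ux; exists x; split => //; right.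
  exact: oU.
apply/continuousP => V [D' sD' <-].
rewrite preimage_bigcup; apply: bigcup_open => A /sD' [fs sfs <-].
rewrite preimage_bigcap openE => x Ax.
apply: filter_bigI => i ifs.
apply: open_nbhs_nbhs; split; last exact: Ax.
apply: op; have := sfs i ifs; rewrite inE; exact.
Qed.

Lemma easy (T : set X) : compact T ->
  hereditarily_disconnected (hyperspace X) ->
  hereditarily_disconnected (collapse T).
Proof.
move=> cT hd L [z0 Lz0] cL; exists z0.
pose f := addpt cT.
have fc : continuous f := @addpt_continuous T cT.
have fhom : {homo f : a b / \pi_(collapse T) a == \pi_(collapse T) b >-> a == b}.
  move=> a b /eqP /piE /collapse_relP h; apply/eqP; apply: hyper_eq => /=.
  case: h => [->//|[Ta Tb]]; apply/seteqP; split => y [Ty|->]; by left.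
pose g : collapse T -> hyperspace X := f \o repr.
have gc : continuous (g : collapse T -> hyperspace X).
  exact: (@repr_comp_continuous X {eq_quot (collapse_rel T)} _ f fc fhom).
have cgL := connected_continuous_connected cL (continuous_subspaceT gc).
have [H eH] := hd _ (ex_intro _ (g z0) (ex_intro2 _ _ z0 Lz0 erefl)) cgL.
apply/seteqP; split => [z Lz|_ -> //] /=.
have e1 : [set g x | x in L] (g z) by exists z.
have e2 : [set g x | x in L] (g z0) by exists z0.
rewrite eH /= in e1 e2.
have e : hset (g z) = hset (g z0) by rewrite e1 e2.
rewrite -[z]reprK -[z0]reprK; apply/piE.
move: e; rewrite /g /f /= => e.
rewrite /collapse_rel; case: (eqVneq (repr z) (repr z0)) => //= ne.
apply/asboolP.
have h1 : (T `|` [set repr z0]) (repr z) by rewrite -e; right.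
have h2 : (T `|` [set repr z]) (repr z0) by rewrite e; right.
case: h1 => [Tz|ez]; last by rewrite ez eqxx in ne.
case: h2 => [Tz0|ez0]; last by rewrite ez0 eqxx in ne.
by split.
Qed.

End Hyper.

Theorem corollary5p6 (X : topologicalType) (Y T : set X) :
  hausdorff_space X ->
  Y `|` T = [set: X] ->
  totally_disconnected_subspace Y ->
  totally_disconnected_subspace T ->
  compact T ->
  (hereditarily_disconnected (hyperspace X) <->
   hereditarily_disconnected (collapse T)).
Proof.
move=> hX YT zdY zdT cT; split; first exact: easy.
exact: hard hX YT zdY zdT cT.
Qed.
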